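(* Let $\Gamma=(G,\sigma)$ be a signed graph with vertex set $V_G = V_1\sqcup V_2\sqcup V$, where $|V_1|=|V_2|=m\ge 1$ and $|V|=d$. Assume: (1) there is an integer $\ell$ such that $d^{\pm}_1(v)-d^{\pm}_2(v)=\ell$ for every $v\in V_1$ and $d^{\pm}_2(u)-d^{\pm}_1(u)=\ell$ for every $u\in V_2$; (2) every $v\in V$ satisfies one of: (a) $d^+_1(v)=m$ and $d^-_1(v)=d^+_2(v)=d^-_2(v)=0$, or the same with the roles of $V_1,V_2$ exchanged; (b) $d^-_1(v)=m$ and $d^+_1(v)=d^+_2(v)=d^-_2(v)=0$, or the same with the roles of $V_1,V_2$ exchanged; (c) $d^{\pm}_1(v)=d^{\pm}_2(v)$; (d) $d^+_1(v)=d^-_2(v)=m$, or the same with the roles of $V_1,V_2$ exchanged. Define $\Gamma'$ on the same vertex set by keeping all edges with both endpoints in $V_1\cup V_2$ or both in $V$, and, for each $v\in V$: in case (a), deleting the $m$ positive edges from $v$ to $V_1$ (resp. $V_2$) and joining $v$ by positive edges to all vertices of $V_2$ (resp. $V_1$); in case (b), deleting the $m$ negative edges from $v$ to $V_1$ (resp. $V_2$) and joining $v$ by negative edges to all vertices of $V_2$ (resp. $V_1$); in case (c), leaving the edges from $v$ unchanged; in case (d), reversing the sign of all $2m$ edges from $v$ to $V_1\cup V_2$ (so $v$ becomes joined negatively to the part it was joined to positively, and positively to the other). Then $\Gamma$ and $\Gamma'$ are cospectral.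
   Context: A signed graph $\Gamma=(G,\sigma)$ is a simple finite graph $G=(V_G,E_G)$ with a map $\sigma:E_G\to\{+1,-1\}$. Its adjacency matrix $A_\Gamma=(a_{uv})$ is the symmetric matrix with $a_{uv}=\sigma(uv)$ if $u,v$ are adjacent and $a_{uv}=0$ otherwise; two signed graphs are cospectral if their adjacency matrices have the same characteristic polynomial. For a vertex $v$ and $i\in\{1,2\}$, $d^+_i(v)$ (resp. $d^-_i(v)$) is the number of positive (resp. negative) edges joining $v$ to vertices of $V_i$, and $d^{\pm}_i(v)=d^+_i(v)-d^-_i(v)$. *)

(* Defs.v *)
From HB Require Import structures.
From mathcomp Require Import all_boot all_order all_algebra.
Set Implicit Arguments. Unset Strict Implicit. Unset Printing Implicit Defensive.
Import Order.TTheory GRing.Theory Num.Theory.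
Local Open Scope ring_scope.

(* A signed graph on vertex set 'I_n is given by its signature-weighted
   adjacency function s : s i j = sigma(ij) if ij is an edge, 0 otherwise. *)
Definition is_signed_graph (n : nat) (s : 'I_n -> 'I_n -> int) : Prop :=
  (forall i j, s i j = s j i) /\ (forall i, s i i = 0) /\
  (forall i j, s i j = 0 \/ s i j = 1 \/ s i j = -1).

Definition adj (n : nat) (s : 'I_n -> 'I_n -> int) : 'M[int]_n :=
  \matrix_(i, j) s i j.

Definition cospectral (n : nat) (s s' : 'I_n -> 'I_n -> int) : Prop :=
  char_poly (adj s) = char_poly (adj s').

Definition dplus (n : nat) (s : 'I_n -> 'I_n -> int) (A : {set 'I_n}) v : nat :=
  #|[set u in A | s v u == 1]|.
Definition dminus (n : nat) (s : 'I_n -> 'I_n -> int) (A : {set 'I_n}) v : nat :=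
  #|[set u in A | s v u == -1]|.
Definition dpm (n : nat) (s : 'I_n -> 'I_n -> int) (A : {set 'I_n}) v : int :=
  (dplus s A v)%:Z - (dminus s A v)%:Z.

Section Cases.
Variables (n m : nat) (s : 'I_n -> 'I_n -> int) (V1 V2 : {set 'I_n}).
Definition caseA1 v := [&& dplus s V1 v == m, dminus s V1 v == 0%N,
                           dplus s V2 v == 0%N & dminus s V2 v == 0%N].
Definition caseA2 v := [&& dplus s V2 v == m, dminus s V2 v == 0%N,
                           dplus s V1 v == 0%N & dminus s V1 v == 0%N].
Definition caseB1 v := [&& dminus s V1 v == m, dplus s V1 v == 0%N,
                           dplus s V2 v == 0%N & dminus s V2 v == 0%N].
Definition caseB2 v := [&& dminus s V2 v == m, dplus s V2 v == 0%N,
                           dplus s V1 v == 0%N & dminus s V1 v == 0%N].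
Definition caseC v := dpm s V1 v == dpm s V2 v.
Definition caseD1 v := (dplus s V1 v == m) && (dminus s V2 v == m).
Definition caseD2 v := (dplus s V2 v == m) && (dminus s V1 v == m).

Definition admissible v :=
  [|| caseA1 v, caseA2 v, caseB1 v, caseB2 v, caseC v, caseD1 v | caseD2 v].

(* new sign of the edge between v in V and u in V1 :|: V2 *)
Definition new_sign v u : int :=
  if caseA1 v then (if u \in V2 then 1 else 0)
  else if caseA2 v then (if u \in V1 then 1 else 0)
  else if caseB1 v then (if u \in V2 then -1 else 0)
  else if caseB2 v then (if u \in V1 then -1 else 0)
  else if caseD1 v || caseD2 v then - s v u
  else s v u.
End Cases.

Definition switched (n m : nat) (s : 'I_n -> 'I_n -> int)
    (V1 V2 V : {set 'I_n}) (i j : 'I_n) : int :=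
  if (i \in V) && (j \in V1 :|: V2) then new_sign m s V1 V2 i j
  else if (j \in V) && (i \in V1 :|: V2) then new_sign m s V1 V2 j i
  else s i j.

(* Main.v *)
Require Import Defs.
From HB Require Import structures.
From mathcomp Require Import all_boot all_order all_algebra.
From mathcomp Require Import ring.
Set Implicit Arguments. Unset Strict Implicit. Unset Printing Implicit Defensive.
Import Order.TTheory GRing.Theory Num.Theory.
Local Open Scope ring_scope.

Definition wf n (V1 V2 : {set 'I_n}) (i : 'I_n) : rat :=
  if i \in V1 then 1 else if i \in V2 then -1 else 0.

Definition aw n (s : 'I_n -> 'I_n -> int) (V1 V2 : {set 'I_n}) (v : 'I_n) : rat :=
  \sum_k (s v k)%:~R * wf V1 V2 k.

Lemma pt_plus n (s : 'I_n -> 'I_n -> int) (X : {set 'I_n}) v u :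
  dplus s X v = #|X| -> u \in X -> s v u = 1.
Proof.
rewrite /dplus => h uX.
have E : [set u in X | s v u == 1] = X.
  apply/eqP; rewrite eqEcard h leqnn andbT.
  by apply/subsetP => x; rewrite inE => /andP[].
by move: uX; rewrite -E inE => /andP[_ /eqP].
Qed.

Lemma pt_minus n (s : 'I_n -> 'I_n -> int) (X : {set 'I_n}) v u :
  dminus s X v = #|X| -> u \in X -> s v u = -1.
Proof.
rewrite /dminus => h uX.
have E : [set u in X | s v u == -1] = X.
  apply/eqP; rewrite eqEcard h leqnn andbT.
  by apply/subsetP => x; rewrite inE => /andP[].
by move: uX; rewrite -E inE => /andP[_ /eqP].
Qed.

Lemma pt_zero n (s : 'I_n -> 'I_n -> int) (X : {set 'I_n}) v u :
  is_signed_graph s ->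
  dplus s X v = 0%N -> dminus s X v = 0%N -> u \in X -> s v u = 0.
Proof.
move=> [_ [_ tri]]; rewrite /dplus /dminus => hp hm uX.
have h1 : s v u != 1.
  apply/negP => e.
  have : u \in [set u in X | s v u == 1] by rewrite inE uX e.
  by rewrite (cards0_eq hp) inE.
have h2 : s v u != -1.
  apply/negP => e.
  have : u \in [set u in X | s v u == -1] by rewrite inE uX e.
  by rewrite (cards0_eq hm) inE.
by case: (tri v u) => [|[]] e //; rewrite e in h1 h2.
Qed.

Lemma card_sum n (X : {set 'I_n}) (P : pred 'I_n) :
  (#|[set u in X | P u]|%:R : rat) = \sum_(u in X) (P u)%:R.
Proof.
rewrite -sum1_card natr_sum [LHS]big_mkcond [RHS]big_mkcond.
by apply: eq_bigr => i _; rewrite inE; case: (i \in X); case: (P i).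
Qed.

Lemma dpm_sum n (s : 'I_n -> 'I_n -> int) (X : {set 'I_n}) v :
  is_signed_graph s ->
  ((dpm s X v)%:~R : rat) = \sum_(u in X) (s v u)%:~R.
Proof.
move=> [_ [_ tri]]; rewrite /dpm /dplus /dminus intrB -!pmulrn.
rewrite !card_sum -sumrB; apply: eq_bigr => u _.
by case: (tri v u) => [|[]] ->.
Qed.

Lemma aw_split n (s : 'I_n -> 'I_n -> int) (V1 V2 : {set 'I_n}) v :
  [disjoint V1 & V2] ->
  aw s V1 V2 v = \sum_(k in V1) (s v k)%:~R - \sum_(k in V2) (s v k)%:~R.
Proof.
move=> dis; rewrite /aw [\sum_(k in V1) _]big_mkcond [\sum_(k in V2) _]big_mkcond.
rewrite -sumrB; apply: eq_bigr => k _; rewrite /wf.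
case: (boolP (k \in V1)) => h1.
  by rewrite (disjointFr dis h1) mulr1 subr0.
by case: (k \in V2) => /=; rewrite ?mulr0 ?subr0 ?mulrN1 ?sub0r.
Qed.

Lemma aw_dpm n (s : 'I_n -> 'I_n -> int) (V1 V2 : {set 'I_n}) v :
  is_signed_graph s -> [disjoint V1 & V2] ->
  aw s V1 V2 v = (dpm s V1 v)%:~R - (dpm s V2 v)%:~R.
Proof. by move=> sg dis; rewrite aw_split // !dpm_sum. Qed.

Lemma sum_const_on n (s : 'I_n -> 'I_n -> int) (X : {set 'I_n}) v (a : int) :
  (forall u, u \in X -> s v u = a) ->
  \sum_(u in X) ((s v u)%:~R : rat) = a%:~R * #|X|%:R.
Proof.
move=> h; rewrite (eq_bigr (fun _ => a%:~R)); last by move=> u /h ->.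
by rewrite sumr_const mulr_natr.
Qed.

Lemma aw_profile n (s : 'I_n -> 'I_n -> int) (V1 V2 : {set 'I_n}) v m (a b : int) :
  [disjoint V1 & V2] -> #|V1| = m -> #|V2| = m ->
  (forall u, u \in V1 -> s v u = a) -> (forall u, u \in V2 -> s v u = b) ->
  aw s V1 V2 v = (a%:~R - b%:~R) * m%:R.
Proof.
move=> dis c1 c2 h1 h2.
by rewrite aw_split // (sum_const_on h1) (sum_const_on h2) c1 c2 mulrBl.
Qed.

Lemma swap_id (m : nat) (a b : rat) : (m%:R : rat) != 0 ->
  b = a - m%:R^-1 * ((a - b) * m%:R) * 1 /\
  a = b - m%:R^-1 * ((a - b) * m%:R) * (-1).
Proof. by move=> h; split; field. Qed.

Lemma key n m (s : 'I_n -> 'I_n -> int) (V1 V2 : {set 'I_n}) v u :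
  is_signed_graph s -> [disjoint V1 & V2] -> #|V1| = m -> #|V2| = m ->
  (0 < m)%N -> admissible m s V1 V2 v -> u \in V1 :|: V2 ->
  ((new_sign m s V1 V2 v u)%:~R : rat) =
  (s v u)%:~R - m%:R^-1 * aw s V1 V2 v * wf V1 V2 u.
Proof.
move=> sg dis c1 c2 m0 adm uV.
have mn0 : (m%:R : rat) != 0 by rewrite pnatr_eq0 -lt0n.
have uc : ((u \in V1) = true /\ (u \in V2) = false) \/
          ((u \in V1) = false /\ (u \in V2) = true).
  move: uV; rewrite inE; case: (boolP (u \in V1)) => h1 /=.
    by left; split => //; rewrite (disjointFr dis h1).
  by move=> ->; right.
rewrite /new_sign.
case: ifP => hA1.
  case/and4P: hA1 => /eqP p1 /eqP q1 /eqP p2 /eqP q2.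
  have h1 : forall x, x \in V1 -> s v x = 1 by move=> x; apply: pt_plus; rewrite p1 c1.
  have h2 : forall x, x \in V2 -> s v x = 0 by move=> x; apply: pt_zero.
  rewrite (aw_profile dis c1 c2 h1 h2).
  have [E1 E2] := swap_id (1:int)%:~R (0:int)%:~R mn0.
  case: uc => [[a1 a2]|[a1 a2]]; rewrite /wf a1 ?a2.
    by rewrite (h1 u) //; exact: E1.
  by rewrite (h2 u) //; exact: E2.
case: ifP => hA2.
  case/and4P: hA2 => /eqP p1 /eqP q1 /eqP p2 /eqP q2.
  have h1 : forall x, x \in V1 -> s v x = 0 by move=> x; apply: pt_zero.
  have h2 : forall x, x \in V2 -> s v x = 1 by move=> x; apply: pt_plus; rewrite p1 c2.
  rewrite (aw_profile dis c1 c2 h1 h2).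
  have [E1 E2] := swap_id (0:int)%:~R (1:int)%:~R mn0.
  case: uc => [[a1 a2]|[a1 a2]]; rewrite /wf a1 ?a2.
    by rewrite (h1 u) //; exact: E1.
  by rewrite (h2 u) //; exact: E2.
case: ifP => hB1.
  case/and4P: hB1 => /eqP p1 /eqP q1 /eqP p2 /eqP q2.
  have h1 : forall x, x \in V1 -> s v x = -1 by move=> x; apply: pt_minus; rewrite p1 c1.
  have h2 : forall x, x \in V2 -> s v x = 0 by move=> x; apply: pt_zero.
  rewrite (aw_profile dis c1 c2 h1 h2).
  have [E1 E2] := swap_id (-1:int)%:~R (0:int)%:~R mn0.
  case: uc => [[a1 a2]|[a1 a2]]; rewrite /wf a1 ?a2.
    by rewrite (h1 u) //; exact: E1.
  by rewrite (h2 u) //; exact: E2.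
case: ifP => hB2.
  case/and4P: hB2 => /eqP p1 /eqP q1 /eqP p2 /eqP q2.
  have h1 : forall x, x \in V1 -> s v x = 0 by move=> x; apply: pt_zero.
  have h2 : forall x, x \in V2 -> s v x = -1 by move=> x; apply: pt_minus; rewrite p1 c2.
  rewrite (aw_profile dis c1 c2 h1 h2).
  have [E1 E2] := swap_id (0:int)%:~R (-1:int)%:~R mn0.
  case: uc => [[a1 a2]|[a1 a2]]; rewrite /wf a1 ?a2.
    by rewrite (h1 u) //; exact: E1.
  by rewrite (h2 u) //; exact: E2.
case: ifP => hD.
  case/orP: hD => /andP[/eqP p1 /eqP p2].
    have h1 : forall x, x \in V1 -> s v x = 1 by move=> x; apply: pt_plus; rewrite p1 c1.
    have h2 : forall x, x \in V2 -> s v x = -1 by move=> x; apply: pt_minus; rewrite p2 c2.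
    rewrite (aw_profile dis c1 c2 h1 h2).
    have [E1 E2] := swap_id (1:int)%:~R (-1:int)%:~R mn0.
    case: uc => [[a1 a2]|[a1 a2]]; rewrite /wf a1 ?a2.
      by rewrite (h1 u) //; exact: E1.
    by rewrite (h2 u) //; exact: E2.
  have h1 : forall x, x \in V1 -> s v x = -1 by move=> x; apply: pt_minus; rewrite p2 c1.
  have h2 : forall x, x \in V2 -> s v x = 1 by move=> x; apply: pt_plus; rewrite p1 c2.
  rewrite (aw_profile dis c1 c2 h1 h2).
  have [E1 E2] := swap_id (-1:int)%:~R (1:int)%:~R mn0.
  case: uc => [[a1 a2]|[a1 a2]]; rewrite /wf a1 ?a2.
    by rewrite (h1 u) //; exact: E1.
  by rewrite (h2 u) //; exact: E2.
move: adm; rewrite /admissible hA1 hA2 hB1 hB2 /= hD orbF => hC.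
by rewrite (aw_dpm v sg dis) (eqP hC) subrr mulr0 mul0r subr0.
Qed.

Lemma char_poly_conj (R : comNzRingType) n (Q A : 'M[R]_n) :
  Q *m Q = 1%:M -> char_poly (Q *m A *m Q) = char_poly A.
Proof.
move=> QQ; rewrite /char_poly /char_poly_mx.
set Qp := map_mx polyC Q.
have QpQp : Qp *m Qp = 1%:M by rewrite -map_mxM QQ map_scalar_mx.
have -> : 'X%:M - map_mx polyC (Q *m A *m Q) = Qp *m ('X%:M - map_mx polyC A) *m Qp.
  rewrite !map_mxM mulmxBr mulmxBl mul_mx_scalar -scalemxAl QpQp.
  by rewrite scalemx1.
rewrite !det_mulmx mulrC mulrA -det_mulmx QpQp det1 mul1r //.
Qed.

Lemma expand_conj n (k : rat) (P A : 'M[rat]_n) :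
  (1%:M - k *: P) *m A *m (1%:M - k *: P) =
  A - k *: (P *m A) - k *: (A *m P) + (k * k) *: (P *m A *m P).
Proof.
rewrite mulmxBl mul1mx mulmxBr mulmx1 !mulmxBl.
rewrite -!scalemxAl -!scalemxAr scalerA.
by rewrite opprB addrA addrAC.
Qed.

Lemma cospec_int n (s s' : 'I_n -> 'I_n -> int) (Q : 'M[rat]_n) :
  Q *m Q = 1%:M ->
  map_mx (intr : int -> rat) (adj s') = Q *m map_mx intr (adj s) *m Q ->
  cospectral s s'.
Proof.
move=> QQ E; rewrite /cospectral.
apply: (@map_inj_poly _ _ (intr : int -> rat)); first exact: intr_inj.
  by rewrite rmorph0.
by rewrite !map_char_poly E char_poly_conj.
Qed.

Definition Pm n (V1 V2 : {set 'I_n}) : 'M[rat]_n :=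
  \matrix_(i, j) (wf V1 V2 i * wf V1 V2 j).

Theorem theorem5p1 (n m d : nat) (s : 'I_n -> 'I_n -> int)
    (V1 V2 V : {set 'I_n}) :
  is_signed_graph s ->
  [disjoint V1 & V2] -> [disjoint V1 & V] -> [disjoint V2 & V] ->
  V1 :|: V2 :|: V = [set: 'I_n] ->
  #|V1| = m -> #|V2| = m -> (1 <= m)%N -> #|V| = d ->
  (exists l : int,
     (forall v, v \in V1 -> dpm s V1 v - dpm s V2 v = l) /\
     (forall u, u \in V2 -> dpm s V2 u - dpm s V1 u = l)) ->
  (forall v, v \in V -> admissible m s V1 V2 v) ->
  cospectral s (switched m s V1 V2 V).
Proof.
move=> sg dis dis1 dis2 cover c1 c2 m1 cd [l [hl1 hl2]] adm.
have sym : forall i j, s i j = s j i by case: sg.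
have mn0 : (m%:R : rat) != 0 by rewrite pnatr_eq0 -lt0n.
set P := Pm V1 V2.
set A : 'M[rat]_n := map_mx intr (adj s).
set w := wf V1 V2.
set a := aw s V1 V2.
set lr : rat := l%:~R.
have cU : #|V1 :|: V2| = (m + m)%N by rewrite cardsU (disjoint_setI0 dis) cards0 subn0 c1 c2.
have sww : \sum_x w x * w x = 2 * m%:R.
  rewrite (eq_bigr (fun x => if x \in V1 :|: V2 then 1 else 0)); last first.
    move=> x _; rewrite /w /wf inE; case: (boolP (x \in V1)) => h /=.
      by rewrite mulr1.
    by case: (x \in V2) => /=; rewrite ?mulrNN ?mulr1 ?mulr0.
  by rewrite -big_mkcond sumr_const cU natrD; ring.
have awU : forall x, x \in V1 :|: V2 -> a x = lr * w x.
  move=> x; rewrite inE /a /w /wf (aw_dpm x sg dis).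
  case: (boolP (x \in V1)) => h /=.
    by rewrite mulr1 -intrB hl1.
  move=> h2; rewrite h2 -opprB -intrB hl2 //; ring.
have sawf : \sum_x a x * w x = lr * (2 * m%:R).
  rewrite (eq_bigr (fun x => if x \in V1 :|: V2 then lr else 0)); last first.
    move=> x _; case: (boolP (x \in V1 :|: V2)) => h; first rewrite awU //.
      move: h; rewrite /w /wf inE; case: (boolP (x \in V1)) => h /=.
        by rewrite !mulr1.
      by move=> ->; ring.
    move: h; rewrite /w /wf inE negb_or => /andP[/negbTE -> /negbTE ->].
    by rewrite mulr0.
  by rewrite -big_mkcond sumr_const cU mulrnDr -mulr_natr; ring.
have PA : P *m A = \matrix_(i, j) (w i * a j).
  apply/matrixP => i j; rewrite !mxE /a /aw big_distrr; apply: eq_bigr => x _.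
  by rewrite !mxE sym /w /=; ring.
have AP : A *m P = \matrix_(i, j) (a i * w j).
  apply/matrixP => i j; rewrite !mxE /a /aw big_distrl; apply: eq_bigr => x _.
  by rewrite !mxE /w /=; ring.
have PAP : P *m A *m P = (lr * (2 * m%:R)) *: P.
  rewrite PA; apply/matrixP => i j; rewrite !mxE.
  under eq_bigr do rewrite !mxE.
  rewrite -sawf big_distrl; apply: eq_bigr => x _; rewrite /w /=; ring.
have PP : P *m P = (2 * m%:R) *: P.
  apply/matrixP => i j; rewrite !mxE.
  under eq_bigr do rewrite !mxE.
  rewrite -sww big_distrl; apply: eq_bigr => x _; rewrite /w /=; ring.
have QQ : (1%:M - m%:R^-1 *: P) *m (1%:M - m%:R^-1 *: P) = 1%:M.
  have E := expand_conj (m%:R^-1) P 1%:M; rewrite !mulmx1 !mul1mx in E.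
  rewrite E PP; apply/matrixP => i j; rewrite !mxE; field; exact: mn0.
apply: (cospec_int QQ).
rewrite expand_conj PAP PA AP; apply/matrixP => i j; rewrite !mxE -/w -/a.
have cov : forall x, (x \in V1 :|: V2) || (x \in V).
  by move=> x; rewrite -in_setU cover inE.
have wV : forall x, x \in V -> w x = 0.
  by move=> x xV; rewrite /w /wf (disjointFl dis1 xV) (disjointFl dis2 xV).
have UV : forall x, x \in V -> (x \in V1 :|: V2) = false.
  by move=> x xV; rewrite inE (disjointFl dis1 xV) (disjointFl dis2 xV).
rewrite /switched.
case: (boolP (i \in V)) => iV /=.
  case: (boolP (j \in V1 :|: V2)) => jU /=.
    rewrite (key sg dis c1 c2 m1 (adm i iV) jU) -/w -/a (wV i iV); ring.
  have jV : j \in V by move: (cov j); rewrite (negbTE jU).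
  rewrite jV UV //= (wV i iV) (wV j jV); ring.
have iU : i \in V1 :|: V2 by move: (cov i); rewrite (negbTE iV) orbF.
case: (boolP (j \in V)) => jV /=.
  rewrite iU (key sg dis c1 c2 m1 (adm j jV) iU) -/w -/a (wV j jV) sym; ring.
have jU : j \in V1 :|: V2 by move: (cov j); rewrite (negbTE jV) orbF.
rewrite (awU i iU) (awU j jU); field; exact: mn0.
Qed.
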